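(* Let $k$ be an algebraically closed field of characteristic $0$, $R$ a finitely generated $k$-algebra which is an $n$-Cayley–Hamilton algebra with trace algebra $T=t(R)$, $P\in V(T)$ with maximal ideal $\mathfrak m_P$, and $R(P):=R/\mathfrak m_PR$ with the induced trace $t:R(P)\to k$. Then the Jacobson radical of $R(P)$ equals the kernel $\{a\in R(P):t(ab)=0\text{ for all }b\in R(P)\}$ of the bilinear trace form $(a,b)\mapsto t(ab)$. In particular $R(P)$ is semisimple if and only if this form is nondegenerate.
   Context: An algebra with trace over a commutative ring $A$ is an associative unital algebra $R$ with an $A$-linear $t:R\to R$ with $t(a)b=bt(a)$, $t(ab)=t(ba)$, $t(t(a)b)=t(a)t(b)$; it is $n$-Cayley–Hamilton if $t(1)=n$ and $\chi^n_a(a)=0$ for all $a$, where $\chi^n_a(x)=x^n+\sum_{i=1}^nP_i(t(a),\dots,t(a^i))x^{n-i}$ with $P_i$ the universal rational polynomials expressing elementary symmetric functions in terms of power sums. $V(T)$ denotes the maximal spectrum of $T$. *)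

(* Defs.v *)
From HB Require Import structures.
From mathcomp Require Import all_boot all_order all_algebra.
Set Implicit Arguments. Unset Strict Implicit. Unset Printing Implicit Defensive.
Import Order.TTheory GRing.Theory.
Local Open Scope ring_scope.

Section Defs.
Variables (k : fieldType) (R : algType k).

Definition is_trace (t : R -> R) : Prop :=
  [/\ forall (c : k) (a b : R), t (c *: a + b) = c *: t a + t b,
      forall a b : R, t a * b = b * t a,
      forall a b : R, t (a * b) = t (b * a) &
      forall a b : R, t (t a * b) = t a * t b].

(* Elementary symmetric functions e_0, ..., e_i expressed through the power
   sums p_1, p_2, ... by Newton's identities (char 0):
   e_0 = 1, e_i = (1/i) sum_{j=1}^i (-1)^(j-1) e_(i-j) p_j. *)
Fixpoint esym_seq (p : nat -> R) (i : nat) : seq R :=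
  match i with
  | 0 => [:: 1]
  | i'.+1 => let s := esym_seq p i' in
      rcons s (((i'.+1)%:R : k)^-1 *:
                 \sum_(j < i'.+1) (-1) ^+ j * s`_(i' - j) * p j.+1)
  end.

Definition esym_tr (t : R -> R) (a : R) (i : nat) : R :=
  (esym_seq (fun j => t (a ^+ j)) i)`_i.

(* chi^n_a(a) = a^n + sum_{i=1}^n P_i(t(a),...,t(a^i)) a^(n-i),
   with P_i = (-1)^i e_i written in the power sums. *)
Definition CH_eval (t : R -> R) (n : nat) (a : R) : R :=
  \sum_(i < n.+1) ((-1) ^+ i * esym_tr t a i) * a ^+ (n - i).

Definition cayley_hamilton (t : R -> R) (n : nat) : Prop :=
  is_trace t /\ t 1 = n%:R /\ forall a : R, CH_eval t n a = 0.

Definition fin_gen_alg : Prop :=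
  exists s : seq R, forall S : {pred R},
    subalg_closed S -> {subset s <= S} -> forall x : R, x \in S.

(* ideals of the trace algebra T = t(R), seen as subsets of R *)
Definition trace_ideal (t : R -> R) (I : R -> Prop) : Prop :=
  [/\ forall x, I x -> exists a, x = t a,
      I 0,
      forall x y, I x -> I y -> I (x + y) &
      forall a x, I x -> I (t a * x)].

(* maximal ideals of T, i.e. points of V(T) *)
Definition max_trace_ideal (t : R -> R) (m : R -> Prop) : Prop :=
  [/\ trace_ideal t m, ~ m 1 &
      forall I, trace_ideal t I -> (forall x, m x -> I x) ->
        ~ I 1 -> forall x, I x -> m x].

Definition ext_ideal (m : R -> Prop) (x : R) : Prop :=
  exists s : seq (R * R), (forall u, u \in s -> m u.1) /\
    x = \sum_(u <- s) u.1 * u.2.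
End Defs.

Section Ring.
Variable (A : nzRingType).
Definition left_ideal (L : A -> Prop) : Prop :=
  [/\ L 0, forall x y, L x -> L y -> L (x + y) &
      forall a x, L x -> L (a * x)].
Definition max_left_ideal (L : A -> Prop) : Prop :=
  [/\ left_ideal L, ~ L 1 &
      forall L', left_ideal L' -> (forall x, L x -> L' x) -> ~ L' 1 ->
        forall x, L' x -> L x].
Definition jacobson (x : A) : Prop :=
  forall L, max_left_ideal L -> L x.
Definition semisimple : Prop :=
  forall L, left_ideal L -> exists L', left_ideal L' /\
    (forall x, L x -> L' x -> x = 0) /\
    (forall x, exists y z, L y /\ L' z /\ x = y + z).
End Ring.

(* Main.v *)
Require Import Defs.
From HB Require Import structures.
From mathcomp Require Import all_boot all_order all_algebra.
From mathcomp Require Import boolp classical_sets.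
Import Order.TTheory GRing.Theory.
Local Open Scope ring_scope.

Lemma size_esym (k : fieldType) (B : algType k) p i : size (esym_seq (R:=B) p i) = i.+1.
Proof. by elim: i => //= i IH; rewrite size_rcons IH. Qed.

Lemma esym_in_alg (k : fieldType) (A : algType k) (q : nat -> k) i l :
  ((esym_seq (R:=k^o) q i)`_l)%:A = (esym_seq (fun j => (q j)%:A : A) i)`_l.
Proof.
elim: i l => [|i IH] l /=.
  by case: l => [|[|l]] /=; rewrite ?scale1r ?scale0r.
rewrite !nth_rcons !size_esym.
case: ltnP => // _; case: eqP => _; last by rewrite scale0r.
rewrite -scalerA; congr (_ *: _).
rewrite -in_algE (rmorph_sum (in_alg A)); apply: eq_bigr => j _.
rewrite !rmorphM rmorphXn rmorphN1 /=.
by rewrite IH.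
Qed.

Lemma esym_map (k : fieldType) (B C : algType k) (f : {lrmorphism B -> C}) p i l :
  f ((esym_seq p i)`_l) = (esym_seq (f \o p) i)`_l.
Proof.
elim: i l => [|i IH] l /=.
  by case: l => [|[|l]] /=; rewrite ?rmorph1 ?rmorph0.
rewrite !nth_rcons !size_esym.
case: ltnP => // _; case: eqP => _; last by rewrite rmorph0.
rewrite linearZ /= rmorph_sum; congr (_ *: _); apply: eq_bigr => j _.
by rewrite !rmorphM rmorphXn rmorphN1 /= IH.
Qed.

Lemma ek_special (k : fieldType) (q : nat -> k) s :
  q 1%N = s -> (forall j, (2 <= j)%N -> q j = 0) ->
  forall i l, (l <= i)%N -> (esym_seq (R:=k^o) q i)`_l = s ^+ l / (l`!)%:R.
Proof.
move=> q1 q2; elim=> [|i IH] l.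
  by rewrite leqn0 => /eqP -> /=; rewrite expr0 fact0 divr1.
rewrite leq_eqVlt => /orP[/eqP ->|]; last first.
  by rewrite ltnS => hl /=; rewrite nth_rcons size_esym ltnS hl IH.
rewrite /= nth_rcons size_esym ltnn eqxx big_ord_recl /= big1; last first.
  by move=> j _; rewrite q2 ?mulr0.
rewrite addr0 subn0 expr0 mul1r q1 IH // factS natrM invfM exprSr.
rewrite /GRing.scale /=.
by rewrite mulrC -!mulrA; congr (_ * _); rewrite mulrC -mulrA; congr (_ * _); rewrite mulrC.
Qed.

Section Abstract.
Variables (k : fieldType) (A : algType k) (n : nat) (tau : A -> k).
Hypothesis hk : [pchar k] =i pred0.
Hypothesis tauL : forall c x y, tau (c *: x + y) = c * tau x + tau y.
Hypothesis tauC : forall x y, tau (x * y) = tau (y * x).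
Hypothesis CH : forall y, CH_eval (fun z => (tau z)%:A) n y = 0.

Lemma tau0 : tau 0 = 0.
Proof. have := tauL 1 0 0; rewrite scale1r addr0 mul1r => h. by apply: (addrI (tau 0)); rewrite addr0 -h. Qed.
Lemma tauD x y : tau (x + y) = tau x + tau y.
Proof. by have := tauL 1 x y; rewrite scale1r mul1r. Qed.
Lemma tauZ c x : tau (c *: x) = c * tau x.
Proof. by rewrite -[c *: x]addr0 tauL tau0 addr0. Qed.

Lemma natf_neq0 m : (m%:R != 0 :> k) = (m != 0%N).
Proof. by have /pcharf0P := hk => ->. Qed.

Definition chi (y : A) : {poly k} :=
  \poly_(j < n.+1) ((-1) ^+ (n - j) * (esym_seq (R:=k^o) (fun j => tau (y ^+ j)) (n - j))`_(n - j)).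

Lemma horner_poly_def (y : A) m (E : nat -> k) :
  horner_alg y (\poly_(j < m) E j) = \sum_(j < m) E j *: y ^+ j.
Proof.
rewrite poly_def linear_sum /=.
apply: eq_bigr.
move=> j _.
by rewrite linearZ /= rmorphXn /= horner_algX mulr_algl.
Qed.

Lemma chi_eval y : horner_alg y (chi y) = 0.
Proof.
rewrite horner_poly_def -[RHS](CH y) /CH_eval (reindex_inj rev_ord_inj) /=.
apply: eq_bigr => i _; rewrite subSS subKn; last by rewrite -ltnS.
rewrite /esym_tr -esym_in_alg -[LHS]mulr_algl; congr (_ * _).
by rewrite -in_algE rmorphM rmorphXn rmorphN1.
Qed.

Lemma chi_size y : size (chi y) = n.+1.
Proof.
by rewrite size_poly_eq //= subnn expr0 mul1r oner_neq0.
Qed.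

Lemma chi_neq0 y : chi y != 0.
Proof. by rewrite -size_poly_eq0 chi_size. Qed.

Lemma CH_special y s : tau y = s -> (forall j, (2 <= j)%N -> tau (y ^+ j) = 0) ->
  \sum_(i < n.+1) ((-1) ^+ i * (s ^+ i / (i`!)%:R)) *: y ^+ (n - i) = 0.
Proof.
move=> h1 h2; rewrite -[RHS](CH y) /CH_eval; apply: eq_bigr => i _.
rewrite -mulr_algl /esym_tr -esym_in_alg (@ek_special _ _ s) ?expr1 //.
by rewrite -in_algE rmorphM rmorphXn rmorphN1.
Qed.

Lemma rinv_nil (y w : A) N : y * w = 1 -> y ^+ N = 0 -> False.
Proof.
move=> yw yN.
have H : forall j, y ^+ j * w ^+ j = 1.
  elim=> [|j IH]; first by rewrite !expr0 mulr1.
  by rewrite exprSr exprS mulrA -(mulrA _ y) yw mulr1.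
by move: (H N); rewrite yN mul0r => /eqP; rewrite eq_sym oner_eq0.
Qed.

Lemma nil_tr1 y N : y ^+ N = 0 -> (forall j, (2 <= j)%N -> tau (y ^+ j) = 0) -> tau y = 0.
Proof.
move=> yN h2; have := @CH_special y (tau y) erefl h2.
set s := tau y; rewrite big_ord_recr /= subnn expr0.
set c := _ * _.
have -> : \sum_(i < n) ((-1) ^+ i * (s ^+ i / (i`!)%:R)) *: y ^+ (n - i) =
   y * \sum_(i < n) ((-1) ^+ i * (s ^+ i / (i`!)%:R)) *: y ^+ (n - i).-1.
  rewrite mulr_sumr; apply: eq_bigr => i _.
  by rewrite -scalerAr -exprS prednK // subn_gt0.
move=> /eqP; rewrite addrC addr_eq0 => /eqP E.
apply/eqP; apply: contraT => sn0.
have cn0 : c != 0.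
  rewrite /c mulf_neq0 ?signr_eq0 // mulf_neq0 ?expf_neq0 ?invr_eq0 ?natf_neq0 //.
  by rewrite -lt0n fact_gt0.
exfalso; apply: (@rinv_nil y (- c^-1 *: \sum_(i < n) ((-1) ^+ i * (s ^+ i / (i`!)%:R)) *: y ^+ (n - i).-1) N) => //.
rewrite scaleNr mulrN -scalerAr.
set Q := y * _ in E *.
have -> : Q = - (c *: 1) by rewrite E opprK.
by rewrite scalerN opprK scalerA mulVf // scale1r.
Qed.

Lemma nil_tr y N : y ^+ N = 0 -> tau y = 0.
Proof.
move=> yN.
suff H : forall d j, (N <= j + d)%N -> (0 < j)%N -> tau (y ^+ j) = 0.
  by rewrite -[y]expr1; apply: (H N).
elim=> [|d IH] j hj j0.
  by rewrite addn0 in hj; rewrite -(subnK hj) exprD yN mulr0 tau0.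
apply: (@nil_tr1 _ N).
  by rewrite -exprM mulnC exprM yN expr0n; case: j j0 {hj}.
move=> i hi; rewrite -exprM; apply: IH; last by rewrite muln_gt0 j0 (leq_trans _ hi).
apply: (leq_trans hj); rewrite addnS -addSn leq_add2r.
by apply: (leq_trans _ (leq_mul (leqnn j) hi)); rewrite muln2 -addnn -addn1 leq_add2l.
Qed.

Lemma K_nil x : (forall z, tau (x * z) = 0) -> x ^+ n = 0.
Proof.
move=> hx.
have h1 : tau x = 0 by rewrite -[x]mulr1 hx.
have h2 : forall j, (2 <= j)%N -> tau (x ^+ j) = 0.
  by move=> [|j] // _; rewrite exprS hx.
have := @CH_special x 0 h1 h2; rewrite big_ord_recl big1 ?addr0.
  by rewrite expr0 mul1r fact0 divr1 scale1r subn0.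
by move=> i _; rewrite expr0n /= mul0r mulr0 scale0r.
Qed.


Lemma horner_comm (y : A) p : horner_alg y p * y = y * horner_alg y p.
Proof.
have := congr1 (horner_alg y) (mulrC p 'X).
by rewrite !rmorphM /= horner_algX.
Qed.

Lemma max_exists (I : A -> Prop) : left_ideal I -> ~ I 1 ->
  exists M : A -> Prop, max_left_ideal M /\ (forall x, I x -> M x).
Proof.
move=> [I0 ID IM] I1.
pose P : set (set A) := fun S => (forall x, ~ S x) \/
   [/\ left_ideal S, ~ S 1 & forall x, I x -> S x].
have [S [PS Smax]] : exists S, P S /\ (forall B, (S `<` B)%classic -> ~ P B).
  apply: Zorn_bigcup => F FP Ftot.
  have Fid : forall X y, F X -> X y -> [/\ left_ideal X, ~ X 1 & forall x, I x -> X x].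
    by move=> X y FX Xy; case: (FP X FX) => // h; case: (h y Xy).
  case: (pselect (exists S, F S /\ exists y, S y)) => [[S0 [FS0 [y0 S0y]]]|hF].
  - right; have [[S00 _ _] _ IS0] := Fid S0 y0 FS0 S0y; split.
    + split.
      * by exists S0.
      * move=> x y [X FX Xx] [Y FY Yy].
        have [[_ XD _] _ _] := Fid X x FX Xx; have [[_ YD _] _ _] := Fid Y y FY Yy.
        case: (Ftot X Y FX FY) => [XY|YX].
          by exists Y => //; apply: YD => //; apply: XY.
        by exists X => //; apply: XD => //; apply: YX.
      * move=> a x [X FX Xx]; have [[_ _ XM] _ _] := Fid X x FX Xx.
        by exists X => //; apply: XM.
    + move=> [X FX X1]; have [_ nX1 _] := Fid X 1 FX X1; exact: nX1.
    + by move=> x Ix; exists S0 => //; apply: IS0.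
  - left => x [X FX Xx]; apply: hF; exists X; split => //; by exists x.
case: PS => [S0|[SL S1 IS]].
  exfalso; apply: (Smax I); last by right.
  split; first by move=> x /S0.
  by move=> /(_ 0 I0) /S0.
exists S; split => //; split => // L' hL' SL' L'1 x L'x.
apply: contrapT => Sx.
apply: (Smax L'); last by right; split => // y /IS /SL'.
split => // => /(_ x L'x); exact: Sx.
Qed.

Lemma J_unit (x : A) : jacobson x -> forall a, exists u, u * (1 - a * x) = 1.
Proof.
move=> hx a; apply: contrapT => hn.
pose I := fun z => exists u, z = u * (1 - a * x).
have [M [hM IM]] : exists M : A -> Prop, max_left_ideal M /\ (forall z, I z -> M z).
  apply: max_exists.
    split; first by exists 0; rewrite mul0r.
      by move=> y z [u ->] [v ->]; exists (u + v); rewrite mulrDl.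
    by move=> b z [u ->]; exists (b * u); rewrite mulrA.
  by move=> [u hu]; apply: hn; exists u.
have Mx := hx M hM; have [[M0 MD MM] M1 _] := hM.
apply: M1; have -> : (1 : A) = (1 - a * x) + a * x by rewrite subrK.
by apply: MD; [apply: IM; exists 1; rewrite mul1r | apply: MM].
Qed.

Lemma J_nil (x : A) : jacobson x -> exists N, x ^+ N = 0.
Proof.
move=> hx.
have [r [g g0 qE]] := multiplicity_XsubC (chi x) 0.
rewrite chi_neq0 /= in g0; rewrite polyC0 subr0 in qE.
have : root (g - (g.[0])%:P) 0 by rewrite /root !hornerE subrr.
move=> /factor_theorem [h hE]; rewrite polyC0 subr0 in hE.
set c := g.[0] in hE.
have c0 : c != 0 by [].
have gE : horner_alg x g = horner_alg x h * x + c%:A.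
  by rewrite -(subrK c%:P g) hE rmorphD rmorphM /= horner_algX horner_algC.
have [u hu] := J_unit x hx (- c^-1 *: horner_alg x h).
exists r.
have e1 : (c^-1 *: u) * horner_alg x g = 1.
  rewrite -hu gE -scalerAl scalerAr; congr (_ * _).
  by rewrite scalerDr scalerA mulVf // scale1r scaleNr mulNr opprK -scalerAl addrC.
rewrite -[x ^+ r]mul1r -e1 -mulrA.
have -> : horner_alg x g * x ^+ r = horner_alg x (chi x).
  by rewrite qE rmorphM rmorphXn /= horner_algX.
by rewrite chi_eval mulr0.
Qed.

Lemma J_sub_K (x : A) : jacobson x -> forall y, tau (x * y) = 0.
Proof.
move=> hx y; rewrite tauC.
have [N hN] : exists N, (y * x) ^+ N = 0.
  by apply: J_nil => M hM; have [[_ _ MM] _ _] := hM; apply: MM; apply: hx.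
exact: (nil_tr _ _ hN).
Qed.

Lemma geo (z : A) m : (\sum_(i < m) z ^+ i) * (1 - z) = 1 - z ^+ m.
Proof.
elim: m => [|m IH]; first by rewrite big_ord0 mul0r expr0 subrr.
rewrite big_ord_recr /= mulrDl IH mulrBr mulr1 -exprSr.
by rewrite addrA subrK.
Qed.

Lemma K_prod (x a : A) : (forall y, tau (x * y) = 0) -> forall y, tau (a * x * y) = 0.
Proof. by move=> hx y; rewrite -mulrA tauC -mulrA hx. Qed.

Lemma K_sub_J (x : A) : (forall y, tau (x * y) = 0) -> jacobson x.
Proof.
move=> hx L [[L0 LD LM] L1 Lmax]; apply: contrapT => nLx.
pose L' := fun z => exists l a, L l /\ z = l + a * x.
have hL' : left_ideal L'.
  split; first by exists 0, 0; rewrite mul0r addr0.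
    move=> y z [l [a [Ll ->]]] [l' [a' [Ll' ->]]].
    by exists (l + l'), (a + a'); split; [apply: LD | rewrite mulrDl addrACA].
  move=> b z [l [a [Ll ->]]].
  by exists (b * l), (b * a); split; [apply: LM | rewrite mulrDr mulrA].
have L'1 : L' 1.
  apply: contrapT => nL'1; apply: nLx; apply: (Lmax L') => //.
    by move=> z Lz; exists z, 0; rewrite mul0r addr0.
  by exists 0, 1; rewrite mul1r add0r.
case: L'1 => l [a [Ll E]].
have an : (a * x) ^+ n = 0 by apply: K_nil; apply: K_prod.
apply: L1; rewrite -(subr0 1) -an -geo.
apply: LM; have -> : 1 - a * x = l by rewrite E addrK.
exact: Ll.
Qed.

Lemma ss_K0 : semisimple A -> forall x, (forall y, tau (x * y) = 0) -> x = 0.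
Proof.
move=> hs x hx.
pose L := fun z => exists a, z = a * x.
have hL : left_ideal L.
  split; first by exists 0; rewrite mul0r.
    by move=> y z [u ->] [v ->]; exists (u + v); rewrite mulrDl.
  by move=> b z [u ->]; exists (b * u); rewrite mulrA.
have [L' [[L'0 L'D L'M] [disj sum]]] := hs L hL.
have [y [z [[a ->] [L'z E]]]] := sum 1.
have an : (a * x) ^+ n = 0 by apply: K_nil; apply: K_prod.
have L'1 : L' 1.
  rewrite -(subr0 1) -an -geo; apply: L'M.
  by have -> : 1 - a * x = z by rewrite E addrAC subrr add0r.
apply: disj; first by exists 1; rewrite mul1r.
by rewrite -[x]mulr1; apply: L'M.
Qed.

Lemma eval_eig (x e : A) (c : k) p : x * e = c *: e -> horner_alg x p * e = p.[c] *: e.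
Proof.
move=> xe; elim/poly_ind: p => [|p c' IH].
  by rewrite rmorph0 mul0r horner0 scale0r.
rewrite rmorphD rmorphM /= horner_algX horner_algC mulrDl -mulrA xe -scalerAr IH.
by rewrite scalerA mulr_algl hornerMXaddC scalerDl mulrC.
Qed.

Lemma natf_inj m p : (m%:R : k) = p%:R -> m = p.
Proof.
wlog le : m p / (p <= m)%N.
  move=> W h; case: (leqP p m) => [|/ltnW] hle; first by apply: W.
  by apply/esym/W.
move=> h; have : ((m - p)%:R : k) == 0 by rewrite natrB // h subrr.
by rewrite -[_ == 0]negbK natf_neq0 negbK subn_eq0 => h2; apply/eqP; rewrite eqn_leq h2.
Qed.

Lemma orth_bound (es : seq A) :
  (forall i, (i < size es)%N -> es`_i * es`_i = es`_i /\ es`_i != 0) ->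
  (forall i j, (i < size es)%N -> (j < size es)%N -> i != j -> es`_i * es`_j = 0) ->
  (size es <= n)%N.
Proof.
move=> hid hor.
pose x := \sum_(i < size es) (i.+1)%:R *: es`_i.
have hxe : forall j, (j < size es)%N -> x * es`_j = (j.+1)%:R *: es`_j.
  move=> j hj; rewrite mulr_suml (bigD1 (Ordinal hj)) //= big1 ?addr0.
    by rewrite -scalerAl (hid j hj).1.
  move=> i hi; rewrite -scalerAl hor ?scaler0 //.
pose rs := [seq (i.+1)%:R : k | i <- iota 0 (size es)].
have hr : all (root (chi x)) rs.
  apply/allP => c /mapP [j]; rewrite mem_iota add0n => /andP [_ hj] ->.
  have := @eval_eig x es`_j _ (chi x) (hxe j hj). rewrite chi_eval mul0r => /esym /eqP.
  by rewrite scaler_eq0 (negbTE (hid j hj).2) orbF.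
have hu : uniq rs.
  rewrite map_inj_uniq ?iota_uniq //.
  by move=> i j /natf_inj [].
have := max_poly_roots (chi_neq0 x) hr hu.
by rewrite chi_size size_map size_iota.
Qed.

Lemma idem_of (N : A -> Prop) : left_ideal N -> forall a, N a ->
  (forall M, a ^+ M != 0) -> exists f, [/\ N f, f * f = f & f != 0].
Proof.
move=> [N0 ND NM] a Na anil.
pose q := 'X * chi a.
have q0 : q != 0 by rewrite mulf_neq0 ?polyX_eq0 ?chi_neq0.
have hq : horner_alg a q = 0 by rewrite rmorphM /= chi_eval mulr0.
have [r [g g0 qE]] := multiplicity_XsubC q 0.
rewrite q0 /= in g0; rewrite polyC0 subr0 in qE.
have r0 : (0 < r)%N.
  case: r qE => // qE; move: g0; rewrite -(mulr1 g) -(expr0 'X) -qE.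
  by rewrite /root /q hornerM hornerX mul0r eqxx.
have cop : coprimep g ('X ^+ r).
  by apply: coprimep_expr; rewrite -(subr0 'X) -polyC0 coprimep_XsubC.
have [[u v] /= uv] := Bezout_eq1_coprimepP _ _ cop.
pose e := horner_alg a (v * 'X ^+ r).
have e1 : horner_alg a (u * g) + e = 1 by rewrite /e -rmorphD uv rmorph1.
have hvg : horner_alg a (v * 'X ^+ r * (u * g)) = 0.
  have -> : v * 'X ^+ r * (u * g) = (u * v) * q.
    by rewrite qE; rewrite mulrC -!mulrA; congr (_ * _); rewrite mulrC -mulrA; congr (_ * _); rewrite mulrC.
  by rewrite rmorphM /= hq mulr0.
exists e; split.
- have -> : e = horner_alg a (v * 'X ^+ r.-1) * a.
    by rewrite /e -{1}(prednK r0) exprSr mulrA rmorphM /= horner_algX.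
  by apply: NM.
- have -> : e * e = e * (1 - horner_alg a (u * g)) by rewrite -e1 addrAC subrr add0r.
  by rewrite mulrBr mulr1 /e -rmorphM /= hvg subr0.
- apply/eqP => e0; move/eqP: (anil r); apply.
  have hug : horner_alg a (u * g) = 1 by rewrite -e1 e0 addr0.
  have hX : horner_alg a ('X ^+ r) = a ^+ r by rewrite rmorphXn /= horner_algX.
  rewrite -[a ^+ r]mul1r -hug -hX -rmorphM /=.
  have -> : u * g * 'X ^+ r = u * q by rewrite qE mulrA.
  by rewrite rmorphM /= hq mulr0.
Qed.

Definition valid (L : A -> Prop) (es : seq A) :=
  [/\ forall i, (i < size es)%N -> L es`_i,
      forall i, (i < size es)%N -> es`_i * es`_i = es`_i /\ es`_i != 0 &
      forall i j, (i < size es)%N -> (j < size es)%N -> i != j -> es`_i * es`_j = 0].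

Lemma K0_ss : (forall x, (forall y, tau (x * y) = 0) -> x = 0) -> semisimple A.
Proof.
move=> K0 L hL; have [L0 LD LM] := hL.
pose goal := exists L' : A -> Prop, left_ideal L' /\
    (forall x, L x -> L' x -> x = 0) /\
    (forall x, exists y z, L y /\ L' z /\ x = y + z).
have step : forall es, valid L es -> goal \/ exists es', valid L es' /\ size es' = (size es).+1.
  move=> es [esL esI esO].
  pose e := \sum_(i < size es) es`_i.
  have eie : forall i, (i < size es)%N -> es`_i * e = es`_i.
    move=> i hi; rewrite mulr_sumr (bigD1 (Ordinal hi)) //= big1 ?addr0.
      by rewrite (esI i hi).1.
    by move=> j hj; rewrite esO //; apply: contra hj => /eqP hij; apply/eqP/val_inj; rewrite /= hij.
  have eei : forall i, (i < size es)%N -> e * es`_i = es`_i.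
    move=> i hi; rewrite mulr_suml (bigD1 (Ordinal hi)) //= big1 ?addr0.
      by rewrite (esI i hi).1.
    by move=> j hj; rewrite esO //; apply: contra hj => /eqP hij; apply/eqP/val_inj; rewrite /= hij.
  have ee : e * e = e.
    by rewrite {1}/e mulr_suml; apply: eq_bigr => i _; apply: eie.
  have Le : L e.
    by apply: (big_ind L) => // i _; apply: esL.
  case: (pselect (exists y, [/\ L y, y * e = 0 & y != 0])) => [[y [Ly ye yn0]]|hno]; last first.
    left; exists (fun x => x * e = 0); split.
      split; first by rewrite mul0r.
        by move=> x z hx hz; rewrite mulrDl hx hz addr0.
      by move=> b x hx; rewrite -mulrA hx mulr0.
    split.
      move=> x Lx xe; apply/eqP; apply: contrapT => xn; apply: hno; exists x; split=> //.
      exact/negP.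
    move=> x; exists (x * e), (x - x * e); split; first by apply: LM.
    by rewrite mulrBl -mulrA ee subrr addrC subrK; split.
  right.
  have : ~ (forall z, tau (y * z) = 0) by move=> h; move: yn0; rewrite (K0 y h) eqxx.
  move=> /existsNP [z hz].
  pose N := fun w => L w /\ w * e = 0.
  have hN : left_ideal N.
    split; first by split => //; rewrite mul0r.
      by move=> w w' [Lw we] [Lw' we']; split; [apply: LD | rewrite mulrDl we we' addr0].
    by move=> b w [Lw we]; split; [apply: LM | rewrite -mulrA we mulr0].
  have Nzy : N (z * y) by split; [apply: LM | rewrite -mulrA ye mulr0].
  have nn : forall M, (z * y) ^+ M != 0.
    by move=> M; apply/eqP => hM; apply: hz; rewrite tauC; apply: (nil_tr _ _ hM).
  have [f [[Lf fe] ff fn0]] := idem_of N hN (z * y) Nzy nn.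
  pose g := f - e * f.
  have h1 : f * (e * f) = 0 by rewrite mulrA fe mul0r.
  have h2 : (e * f) * f = e * f by rewrite -mulrA ff.
  have h3 : (e * f) * (e * f) = 0 by rewrite -mulrA (mulrA f) fe mul0r mulr0.
  have Lg : L g by apply: LD => //; rewrite -mulNr; apply: LM.
  have gg : g * g = g by rewrite /g mulrBl !mulrBr ff h1 h2 h3 !subr0.
  have gn0 : g != 0.
    apply: contra fn0 => /eqP /subr0_eq hf.
    by apply/eqP; rewrite -ff {2}hf h1.
  have ig : forall i, (i < size es)%N -> es`_i * g = 0.
    by move=> i hi; rewrite /g mulrBr mulrA eie // subrr.
  have gi : forall i, (i < size es)%N -> g * es`_i = 0.
    move=> i hi; have fi : f * es`_i = 0 by rewrite -(eei i hi) mulrA fe mul0r.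
    by rewrite /g mulrBl fi -mulrA fi mulr0 subrr.
  exists (rcons es g); split; last by rewrite size_rcons.
  split; rewrite size_rcons.
  - move=> i; rewrite ltnS leq_eqVlt => /orP [/eqP ->|hi].
      by rewrite nth_rcons ltnn eqxx.
    by rewrite nth_rcons hi; apply: esL.
  - move=> i; rewrite ltnS leq_eqVlt => /orP [/eqP ->|hi].
      by rewrite nth_rcons ltnn eqxx.
    by rewrite nth_rcons hi; apply: esI.
  - move=> i j hi hj hij; rewrite !nth_rcons.
    have [hi'|hi'] := ltnP i (size es); have [hj'|hj'] := ltnP j (size es).
    + by rewrite esO.
    + have ej : j = size es by apply/eqP; rewrite eqn_leq hj' -ltnS hj.
      by rewrite ej eqxx ig.
    + have ei : i = size es by apply/eqP; rewrite eqn_leq hi' -ltnS hi.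
      by rewrite ei eqxx gi.
    + have ej : j = size es by apply/eqP; rewrite eqn_leq hj' -ltnS hj.
      have ei : i = size es by apply/eqP; rewrite eqn_leq hi' -ltnS hi.
      by move: hij; rewrite ei ej eqxx.
suff H : forall d es, valid L es -> (n - size es <= d)%N -> goal.
  apply: (H n [::]) => //; last by rewrite subn0.
elim=> [|d IH] es hv hd; case: (step es hv) => // [[es' [hv' hs]]].
  case: hv' => _ hI hO; have := orth_bound es' hI hO.
  rewrite hs; rewrite leqn0 subn_eq0 in hd => h; exfalso; move: (leq_trans h hd); by rewrite ltnn.
apply: (IH es' hv'); rewrite hs subnS.
by rewrite -subn1 leq_subLR add1n.
Qed.
End Abstract.

Lemma esym_ext (k : fieldType) (B : algType k) (p p' : nat -> B) i :
  p =1 p' -> esym_seq p i = esym_seq p' i.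
Proof.
move=> h; elim: i => [|i IH] //=; rewrite IH; congr rcons; congr (_ *: _).
by apply: eq_bigr => j _; rewrite h.
Qed.

Theorem proposition5p7
  (k : closedFieldType) (hk : [pchar k] =i pred0)
  (R : algType k) (n : nat) (t : R -> R)
  (hfg : fin_gen_alg R) (hCH : cayley_hamilton t n)
  (m : R -> Prop) (hm : max_trace_ideal t m)
  (RP : algType k) (pi : {lrmorphism R -> RP})
  (pi_surj : forall y : RP, exists x : R, pi x = y)
  (pi_ker : forall x : R, pi x = 0 <-> ext_ideal m x)
  (tP : RP -> k) (htP : forall a : R, m (t a - (tP (pi a))%:A)) :
  (forall x : RP, jacobson x <-> (forall y : RP, tP (x * y) = 0)) /\
  (semisimple RP <-> (forall x : RP, (forall y : RP, tP (x * y) = 0) -> x = 0)).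
Proof.
case: hCH => [[tL _ tC _] [_ tCH]].
have piT : forall a, pi (t a) = (tP (pi a))%:A.
  move=> a; have [_ h] := pi_ker (t a - (tP (pi a))%:A).
  have : pi (t a - (tP (pi a))%:A) = 0.
    apply: h; exists [:: (t a - (tP (pi a))%:A, 1)]; split.
      by move=> u; rewrite mem_seq1 => /eqP ->; apply: htP.
    by rewrite big_seq1 mulr1.
  by rewrite rmorphB /= rmorph_alg => /eqP; rewrite subr_eq0 => /eqP.
have alg_inj : forall c d : k, (c%:A : RP) = d%:A -> c = d.
  move=> c d /eqP; rewrite -subr_eq0 -scalerBl scaler_eq0 oner_eq0 orbF subr_eq0.
  by move/eqP.
have tauL : forall c x y, tP (c *: x + y) = c * tP x + tP y.
  move=> c x y; have [a <-] := pi_surj x; have [b <-] := pi_surj y.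
  apply: alg_inj; rewrite -linearP -piT.
  have -> : t (c *: a + b) = c *: t a + t b by rewrite tL.
  rewrite linearP.
  transitivity (c *: (tP (pi a))%:A + (tP (pi b))%:A : RP).
    by congr (_ *: _ + _); apply: piT.
  by rewrite scalerDl scalerA.
have tauC : forall x y, tP (x * y) = tP (y * x).
  move=> x y; have [a <-] := pi_surj x; have [b <-] := pi_surj y.
  by apply: alg_inj; rewrite -!rmorphM -!piT tC.
have CH : forall y, CH_eval (fun z => (tP z)%:A) n y = 0.
  move=> y; have [a <-] := pi_surj y.
  have := congr1 pi (tCH a); rewrite rmorph0 => <-.
  rewrite /CH_eval rmorph_sum; apply: eq_bigr => i _.
  rewrite !rmorphM rmorphXn rmorphN1 rmorphXn /=; congr (_ * _ * _).
  rewrite /esym_tr esym_map; congr (_`_ _); apply: esym_ext => j /=.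
  by rewrite piT rmorphXn.
split.
- move=> x; split.
    by move=> hx y; apply: (@J_sub_K k RP n tP hk tauL tauC CH x).
  by apply: (@K_sub_J k RP n tP tauC CH x).
- split.
    by move=> hs; apply: (@ss_K0 k RP n tP tauC CH hs).
  by apply: (@K0_ss k RP n tP hk tauL tauC CH).
Qed.
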